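(* Let $\Pi_1,\Pi_2$ be propositional disjunctive programs and $A^+,A^-$ sets of atoms. Then $\Pi_1$ and $\Pi_2$ are relativized hyperequivalent w.r.t. $A^+$ and $A^-$ in the logic programming sense if and only if (viewed as propositional theories) they are relativized hyperequivalent w.r.t. $A^+$ and $A^-$.
   Context: A rule $r$ has the form $a_1\vee\dots\vee a_k\vee\neg a_{k+1}\vee\dots\vee\neg a_l\leftarrow b_1,\dots,b_m,\neg b_{m+1},\dots,\neg b_n$ with atoms $a_i,b_j$, $l\ge k\ge0$, $n\ge m\ge0$, $l+n>0$; $H^+(r)=\{a_1,..,a_k\}$, $H^-(r)=\{a_{k+1},..,a_l\}$, $B^+(r)=\{b_1,..,b_m\}$, $B^-(r)=\{b_{m+1},..,b_n\}$, and the body atoms are $B^+(r)\cup B^-(r)$. A program is a set of rules. A set $I$ of atoms satisfies $r$ iff $B^+(r)\subseteq I$ and $B^-(r)\cap I=\emptyset$ imply $I\cap H^+(r)\ne\emptyset$ or $H^-(r)\not\subseteq I$. The reduct $\Pi^I$ consists of the rules $a_1\vee\dots\vee a_k\leftarrow b_1,\dots,b_m$ for those rules of $\Pi$ with $H^-(r)\subseteq I$ and $B^-(r)\cap I=\emptyset$; $I$ is an answer set of $\Pi$ iff $I$ satisfies $\Pi^I$ and is subset-minimal with this property. $\Pi_1,\Pi_2$ are relativized hyperequivalent w.r.t. $A^+,A^-$ in the logic programming sense iff for every program $\Pi$ whose rules satisfy $H^-(r)=\emptyset$, $H^+(r)\subseteq A^+$ and all body atoms in $A^-$, the programs $\Pi_1\cup\Pi$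 and $\Pi_2\cup\Pi$ have the same answer sets. As theories, a rule is read as the formula $\beta_r\to\alpha_r$, with $\alpha_r$ the disjunction of the head literals ($\bot$ if empty), $\beta_r$ the conjunction of body literals ($\top=\bot\to\bot$ if empty), and $\neg p$ meaning $p\to\bot$. HT-interpretations $(X,Y)$, $X\subseteq Y$; $(X,Y)\models a$ iff $a\in X$; $(X,Y)\not\models\bot$; $\wedge,\vee$ componentwise; $(X,Y)\models\phi\to\psi$ iff ((X,Y)$\not\models\phi$ or $(X,Y)\models\psi$) and $Y\models\phi\to\psi$ classically. $Y$ is an answer set of a theory $\Gamma$ iff $(Y,Y)\models\Gamma$ and no $X\subsetneq Y$ has $(X,Y)\models\Gamma$. Polarity of occurrences: the occurrence of $\phi$ in itself is positive; subformulas of a positive (negative) $\wedge$/$\vee$-occurrence inherit its polarity; in an occurrence of $\psi_1\to\psi_2$, $\psi_1$ is negative and $\psi_2$ positive, and if the occurrence is negative additionally $\psi_1$ is positive and $\psi_2$ negative. An $A^+$-$A^-$-theory is a theory over $A^+\cup A^-$ whose positive atom occurrences are in $A^+$ and negative atom occurrences in $A^-$ ($\bot$ unrestricted). Theories $\Gamma_1,\Gamma_2$ are relativized hyperequivalent w.r.t. $A^+,A^-$ iff for every $A^+$-$A^-$-theory $\Gamma$, $\Gamma_1\cup\Gamma$ and $\Gamma_2\cup\Gamma$ have the same answer sets. *)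

(* Defs.v *)
From Stdlib Require Import List.
Import ListNotations.
Set Implicit Arguments.

Section Defs.
Variable atom : Type.

Definition aset := atom -> Prop.
Definition subset (X Y : aset) : Prop := forall a, X a -> Y a.
Definition psubset (X Y : aset) : Prop := subset X Y /\ ~ subset Y X.

(* a rule  a1 v .. v ak v ~a_{k+1} v .. v ~a_l <- b1,..,bm, ~b_{m+1},..,~b_n *)
Record rule := mkRule { Hpos : list atom; Hneg : list atom; Bpos : list atom; Bneg : list atom }.

Definition rule_wf (r : rule) : Prop :=
  Hpos r <> [] \/ Hneg r <> [] \/ Bpos r <> [] \/ Bneg r <> [].

Definition program := rule -> Prop.
Definition is_program (P : program) : Prop := forall r, P r -> rule_wf r.

Definition lsub (l : list atom) (I : aset) : Prop := forall a, In a l -> I a.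
Definition ldisj (l : list atom) (I : aset) : Prop := forall a, In a l -> ~ I a.
Definition lmeets (l : list atom) (I : aset) : Prop := exists a, In a l /\ I a.

Definition sat_rule (I : aset) (r : rule) : Prop :=
  lsub (Bpos r) I -> ldisj (Bneg r) I -> lmeets (Hpos r) I \/ ~ lsub (Hneg r) I.

Definition sat_prog (I : aset) (P : program) : Prop := forall r, P r -> sat_rule I r.

Definition reduct (P : program) (I : aset) : program :=
  fun r' => exists r, P r /\ lsub (Hneg r) I /\ ldisj (Bneg r) I /\
            r' = mkRule (Hpos r) [] (Bpos r) [].

Definition lp_answer_set (P : program) (I : aset) : Prop :=
  sat_prog I (reduct P I) /\ ~ (exists J, psubset J I /\ sat_prog J (reduct P I)).

Definition prog_union (P Q : program) : program := fun r => P r \/ Q r.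

Definition lp_context (Ap Am : aset) (P : program) : Prop :=
  is_program P /\
  forall r, P r -> Hneg r = [] /\ lsub (Hpos r) Ap /\ lsub (Bpos r) Am /\ lsub (Bneg r) Am.

Definition lp_rel_hyperequiv (P1 P2 : program) (Ap Am : aset) : Prop :=
  forall P, lp_context Ap Am P ->
    forall I, lp_answer_set (prog_union P1 P) I <-> lp_answer_set (prog_union P2 P) I.

Inductive form :=
| FAtom : atom -> form
| FBot : form
| FAnd : form -> form -> form
| FOr : form -> form -> form
| FImp : form -> form -> form.

Definition FNeg (p : form) : form := FImp p FBot.
Definition FTop : form := FImp FBot FBot.

Fixpoint bigOr (l : list form) : form :=
  match l with
  | [] => FBot
  | [x] => x
  | x :: xs => FOr x (bigOr xs)
  end.

Fixpoint bigAnd (l : list form) : form :=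
  match l with
  | [] => FTop
  | [x] => x
  | x :: xs => FAnd x (bigAnd xs)
  end.

Definition rule_formula (r : rule) : form :=
  FImp (bigAnd (map FAtom (Bpos r) ++ map (fun b => FNeg (FAtom b)) (Bneg r)))
       (bigOr (map FAtom (Hpos r) ++ map (fun a => FNeg (FAtom a)) (Hneg r))).

Definition theory := form -> Prop.
Definition theory_of (P : program) : theory := fun f => exists r, P r /\ f = rule_formula r.
Definition th_union (T U : theory) : theory := fun f => T f \/ U f.

Fixpoint csat (Y : aset) (f : form) : Prop :=
  match f with
  | FAtom a => Y a
  | FBot => False
  | FAnd f g => csat Y f /\ csat Y g
  | FOr f g => csat Y f \/ csat Y g
  | FImp f g => csat Y f -> csat Y g
  end.

Fixpoint htsat (X Y : aset) (f : form) : Prop :=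
  match f with
  | FAtom a => X a
  | FBot => False
  | FAnd f g => htsat X Y f /\ htsat X Y g
  | FOr f g => htsat X Y f \/ htsat X Y g
  | FImp f g => (~ htsat X Y f \/ htsat X Y g) /\ csat Y (FImp f g)
  end.

Definition ht_model (X Y : aset) (T : theory) : Prop := forall f, T f -> htsat X Y f.

Definition th_answer_set (T : theory) (Y : aset) : Prop :=
  ht_model Y Y T /\ ~ (exists X, psubset X Y /\ ht_model X Y T).

(* polarity check: [pol_ok Ap Am pos f] holds iff every atom occurrence of f
   that is positive (resp. negative), when f itself occurs with polarity
   [pos] (true = positive), lies in Ap (resp. Am). *)
Fixpoint pol_ok (Ap Am : aset) (pos : bool) (f : form) : Prop :=
  match f with
  | FAtom a => if pos then Ap a else Am a
  | FBot => True
  | FAnd f g => pol_ok Ap Am pos f /\ pol_ok Ap Am pos g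
  | FOr f g => pol_ok Ap Am pos f /\ pol_ok Ap Am pos g
  | FImp f g =>
      if pos then pol_ok Ap Am false f /\ pol_ok Ap Am true g
      else (pol_ok Ap Am false f /\ pol_ok Ap Am true g) /\
           (pol_ok Ap Am true f /\ pol_ok Ap Am false g)
  end.

Fixpoint atoms_in (S : aset) (f : form) : Prop :=
  match f with
  | FAtom a => S a
  | FBot => True
  | FAnd f g | FOr f g | FImp f g => atoms_in S f /\ atoms_in S g
  end.

Definition ApAm_theory (Ap Am : aset) (T : theory) : Prop :=
  forall f, T f -> atoms_in (fun a => Ap a \/ Am a) f /\ pol_ok Ap Am true f.

Definition th_rel_hyperequiv (T1 T2 : theory) (Ap Am : aset) : Prop :=
  forall T, ApAm_theory Ap Am T ->
    forall Y, th_answer_set (th_union T1 T) Y <-> th_answer_set (th_union T2 T) Y.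

End Defs.

(* Main.v *)
Require Import Defs.
From Stdlib Require Import List Classical.
Import ListNotations.

Section Proof.
Variable atom : Type.
Implicit Types (X Y : aset atom) (f g : form atom) (l : list (form atom)) (r : rule atom).

Lemma ht_bigAnd X Y l : htsat X Y (bigAnd l) <-> (forall g, In g l -> htsat X Y g).
Proof.
  induction l as [|x xs IH].
  - simpl. split; [intros _ g []|]. intros _. split; [left; tauto| tauto].
  - destruct xs as [|y ys].
    + simpl. split; [intros H g [<-|[]]; exact H| intros H; apply H; left; reflexivity].
    + change (bigAnd (x :: y :: ys)) with (FAnd x (bigAnd (y :: ys))).
      simpl htsat at 1. rewrite IH. split.
      * intros [H1 H2] g [<-|Hg]; [exact H1| apply H2; exact Hg].
      * intros H; split; [apply H; left; reflexivity| intros g Hg; apply H; right; exact Hg].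
Qed.

Lemma cs_bigAnd Y l : csat Y (bigAnd l) <-> (forall g, In g l -> csat Y g).
Proof.
  induction l as [|x xs IH].
  - simpl. split; [intros _ g []|]. intros _ H; exact H.
  - destruct xs as [|y ys].
    + simpl. split; [intros H g [<-|[]]; exact H| intros H; apply H; left; reflexivity].
    + change (bigAnd (x :: y :: ys)) with (FAnd x (bigAnd (y :: ys))).
      simpl csat at 1. rewrite IH. split.
      * intros [H1 H2] g [<-|Hg]; [exact H1| apply H2; exact Hg].
      * intros H; split; [apply H; left; reflexivity| intros g Hg; apply H; right; exact Hg].
Qed.

Lemma ht_bigOr X Y l : htsat X Y (bigOr l) <-> (exists g, In g l /\ htsat X Y g).
Proof.
  induction l as [|x xs IH].
  - simpl. split; [tauto| intros [g [[] _]]].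
  - destruct xs as [|y ys].
    + simpl. split; [intros H; exists x; tauto| intros [g [[<-|[]] H]]; exact H].
    + change (bigOr (x :: y :: ys)) with (FOr x (bigOr (y :: ys))).
      simpl htsat at 1. rewrite IH. split.
      * intros [H|[g [Hg H]]]; [exists x; split; [left|]; auto | exists g; split; [right|]; auto].
      * intros [g [[<-|Hg] H]]; [left; exact H| right; exists g; auto].
Qed.

Lemma cs_bigOr Y l : csat Y (bigOr l) <-> (exists g, In g l /\ csat Y g).
Proof.
  induction l as [|x xs IH].
  - simpl. split; [tauto| intros [g [[] _]]].
  - destruct xs as [|y ys].
    + simpl. split; [intros H; exists x; tauto| intros [g [[<-|[]] H]]; exact H].
    + change (bigOr (x :: y :: ys)) with (FOr x (bigOr (y :: ys))).
      simpl csat at 1. rewrite IH. split.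
      * intros [H|[g [Hg H]]]; [exists x; split; [left|]; auto | exists g; split; [right|]; auto].
      * intros [g [[<-|Hg] H]]; [left; exact H| right; exists g; auto].
Qed.

Lemma in_body (P : form atom -> Prop) (Bp Bn : list atom) :
  (forall g, In g (map (@FAtom atom) Bp ++ map (fun b => FNeg (FAtom b)) Bn) -> P g) <->
  (forall a, In a Bp -> P (FAtom a)) /\ (forall a, In a Bn -> P (FNeg (FAtom a))).
Proof.
  split.
  - intros H; split; intros a Ha; apply H; apply in_or_app;
      [left; apply in_map; exact Ha | right; apply (in_map (fun b => FNeg (FAtom b))); exact Ha].
  - intros [H1 H2] g Hg. apply in_app_or in Hg as [Hg|Hg];
      apply in_map_iff in Hg as [a [<- Ha]]; auto.
Qed.

Lemma in_head (P : form atom -> Prop) (Hp Hn : list atom) :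
  (exists g, In g (map (@FAtom atom) Hp ++ map (fun b => FNeg (FAtom b)) Hn) /\ P g) <->
  (exists a, In a Hp /\ P (FAtom a)) \/ (exists a, In a Hn /\ P (FNeg (FAtom a))).
Proof.
  split.
  - intros [g [Hg Pg]]. apply in_app_or in Hg as [Hg|Hg];
      apply in_map_iff in Hg as [a [<- Ha]]; [left|right]; exists a; auto.
  - intros [[a [Ha Pa]]|[a [Ha Pa]]]; eexists; split; try eassumption; apply in_or_app;
      [left; apply in_map; exact Ha | right; apply (in_map (fun b => FNeg (FAtom b))); exact Ha].
Qed.

Lemma cs_rule Y r : csat Y (rule_formula r) <-> sat_rule Y r.
Proof.
  destruct r as [Hp Hn Bp Bn]. unfold rule_formula, sat_rule, lsub, ldisj, lmeets. simpl.
  rewrite cs_bigAnd, cs_bigOr, in_body, in_head. simpl.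
  split.
  - intros H H1 H2. destruct (H (conj H1 H2)) as [[a [Ha Ya]]|[a [Ha Ya]]].
    + left; exists a; auto.
    + right; intro Hs; apply Ya, Hs, Ha.
  - intros H [H1 H2]. destruct (H H1 H2) as [[a [Ha Ya]]|Hs].
    + left; exists a; auto.
    + right. apply NNPP; intro Hc. apply Hs. intros a Ha. apply NNPP; intro Hy.
      apply Hc; exists a; auto.
Qed.

Lemma ht_rule X Y r : subset X Y ->
  (htsat X Y (rule_formula r) <-> sat_rule Y r /\
     (lsub (Hneg r) Y -> ldisj (Bneg r) Y -> lsub (Bpos r) X -> lmeets (Hpos r) X)).
Proof.
  intros XY. rewrite <- cs_rule.
  destruct r as [Hp Hn Bp Bn]. unfold rule_formula, lsub, ldisj, lmeets.
  change (htsat X Y (FImp ?a ?b)) with ((~ htsat X Y a \/ htsat X Y b) /\ csat Y (FImp a b)).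
  simpl Hpos; simpl Hneg; simpl Bpos; simpl Bneg.
  rewrite ht_bigAnd, ht_bigOr, in_body, in_head. simpl.
  assert (E : forall a, ((~ X a \/ False) /\ (Y a -> False)) <-> ~ Y a)
    by (intros a; split; [tauto| intros H; split; [left; intro Hx; apply H, XY, Hx| exact H]]).
  setoid_rewrite E.
  split; intros [H1 H2].
  - split; [exact H2|]. intros Hs Hd Hb. destruct H1 as [H1|[[a [Ha Xa]]|[a [Ha Ya]]]].
    + exfalso; apply H1; split; auto.
    + exists a; auto.
    + exfalso; apply Ya, Hs, Ha.
  - split; [|exact H1]. destruct (classic (forall a, In a Hn -> Y a)) as [Hs|Hs].
    + destruct (classic ((forall a, In a Bp -> X a) /\ (forall a, In a Bn -> ~ Y a))) as [Hb|Hb].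
      * right; left. apply H2; tauto.
      * left; exact Hb.
    + right; right. apply NNPP; intro Hc. apply Hs. intros a Ha. apply NNPP; intro Hy.
      apply Hc; exists a; auto.
Qed.


Lemma red_equiv X Y (P : program atom) : sat_prog X (reduct P Y) <->
  forall r, P r -> (lsub (Hneg r) Y -> ldisj (Bneg r) Y -> lsub (Bpos r) X -> lmeets (Hpos r) X).
Proof.
  unfold sat_prog, reduct, sat_rule. split.
  - intros H r Pr Hs Hd Hb. destruct (H _ (ex_intro _ r (conj Pr (conj Hs (conj Hd eq_refl))))) as [H1|H1];
      simpl in *; [exact Hb| intros a []| exact H1| exfalso; apply H1; intros a []].
  - intros H r' [r [Pr [Hs [Hd ->]]]]. simpl. intros Hb _. left. apply H; auto.
Qed.

Lemma red_self Y (P : program atom) : sat_prog Y (reduct P Y) <-> sat_prog Y P.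
Proof.
  rewrite red_equiv. unfold sat_prog, sat_rule. split.
  - intros H r Pr Hb Hd. destruct (classic (lsub (Hneg r) Y)) as [Hs|Hs]; [left; apply H; auto| right; exact Hs].
  - intros H r Pr Hs Hd Hb. destruct (H r Pr Hb Hd) as [H1|H1]; [exact H1| contradiction].
Qed.

Lemma th_models X Y (P : program atom) : subset X Y ->
  (ht_model X Y (theory_of P) <-> sat_prog Y P /\ sat_prog X (reduct P Y)).
Proof.
  intros XY. rewrite red_equiv. unfold ht_model, theory_of, sat_prog. split.
  - intros H; split; intros r Pr; specialize (H _ (ex_intro _ r (conj Pr eq_refl)));
      apply ht_rule in H; tauto.
  - intros [H1 H2] f [r [Pr ->]]. apply ht_rule; auto.
Qed.

Lemma subset_refl Y : subset Y Y.
Proof. intros a H; exact H. Qed.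

Lemma lp_th (P : program atom) Y : lp_answer_set P Y <-> th_answer_set (theory_of P) Y.
Proof.
  unfold lp_answer_set, th_answer_set. rewrite th_models by apply subset_refl.
  rewrite !red_self. split.
  - intros [H1 H2]. split; [split; exact H1|].
    intros [X [HX HM]]. apply H2. exists X. split; [exact HX|].
    apply th_models in HM; [tauto| apply HX].
  - intros [[H1 H1'] H2]. split; [exact H1|].
    intros [X [HX HM]]. apply H2. exists X. split; [exact HX|].
    apply th_models; [apply HX| tauto].
Qed.

Lemma as_ext (T U : theory atom) Y :
  (forall X, subset X Y -> (ht_model X Y T <-> ht_model X Y U)) ->
  (th_answer_set T Y <-> th_answer_set U Y).
Proof.
  intros E. unfold th_answer_set. rewrite (E Y (subset_refl Y)). split.
  - intros [H1 H2]; split; [exact H1|]. intros [X [HX HM]]; apply H2; exists X; split; [exact HX|].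
    apply E; [apply HX| exact HM].
  - intros [H1 H2]; split; [exact H1|]. intros [X [HX HM]]; apply H2; exists X; split; [exact HX|].
    apply E; [apply HX| exact HM].
Qed.

Lemma model_thu X Y (T U : theory atom) :
  ht_model X Y (th_union T U) <-> ht_model X Y T /\ ht_model X Y U.
Proof.
  unfold ht_model, th_union. split.
  - intros H; split; intros f Hf; apply H; auto.
  - intros [H1 H2] f [Hf|Hf]; auto.
Qed.

Lemma model_pu X Y (P Q : program atom) :
  ht_model X Y (theory_of (prog_union P Q)) <-> ht_model X Y (theory_of P) /\ ht_model X Y (theory_of Q).
Proof.
  unfold ht_model, theory_of, prog_union. split.
  - intros H; split; intros f [r [Pr ->]]; apply H; exists r; auto.
  - intros [H1 H2] f [r [[Pr|Pr] ->]]; [apply H1| apply H2]; exists r; auto.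
Qed.


Lemma lsub_nil (I : aset atom) : lsub [] I.
Proof. intros a []. Qed.
Lemma ldisj_nil (I : aset atom) : ldisj [] I.
Proof. intros a []. Qed.

Lemma pol_bigAnd Ap Am p l : (forall g, In g l -> pol_ok Ap Am p g) -> pol_ok Ap Am p (bigAnd l).
Proof.
  induction l as [|x xs IH]; intros H.
  - destruct p; simpl; tauto.
  - destruct xs as [|y ys]; [apply H; left; reflexivity|].
    change (bigAnd (x :: y :: ys)) with (FAnd x (bigAnd (y :: ys))). simpl pol_ok at 1.
    split; [apply H; left; reflexivity| apply IH; intros g Hg; apply H; right; exact Hg].
Qed.

Lemma pol_bigOr Ap Am p l : (forall g, In g l -> pol_ok Ap Am p g) -> pol_ok Ap Am p (bigOr l).
Proof.
  induction l as [|x xs IH]; intros H.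
  - simpl; tauto.
  - destruct xs as [|y ys]; [apply H; left; reflexivity|].
    change (bigOr (x :: y :: ys)) with (FOr x (bigOr (y :: ys))). simpl pol_ok at 1.
    split; [apply H; left; reflexivity| apply IH; intros g Hg; apply H; right; exact Hg].
Qed.

Lemma at_bigAnd S l : (forall g, In g l -> atoms_in S g) -> atoms_in S (bigAnd l).
Proof.
  induction l as [|x xs IH]; intros H.
  - simpl; tauto.
  - destruct xs as [|y ys]; [apply H; left; reflexivity|].
    change (bigAnd (x :: y :: ys)) with (FAnd x (bigAnd (y :: ys))). simpl atoms_in at 1.
    split; [apply H; left; reflexivity| apply IH; intros g Hg; apply H; right; exact Hg].
Qed.

Lemma at_bigOr S l : (forall g, In g l -> atoms_in S g) -> atoms_in S (bigOr l).
Proof.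
  induction l as [|x xs IH]; intros H.
  - simpl; tauto.
  - destruct xs as [|y ys]; [apply H; left; reflexivity|].
    change (bigOr (x :: y :: ys)) with (FOr x (bigOr (y :: ys))). simpl atoms_in at 1.
    split; [apply H; left; reflexivity| apply IH; intros g Hg; apply H; right; exact Hg].
Qed.

Lemma pos_rule_ApAm (Ap Am : aset atom) (H B : list atom) :
  lsub H Ap -> lsub B Am ->
  atoms_in (fun a => Ap a \/ Am a) (rule_formula (mkRule H [] B [])) /\
  pol_ok Ap Am true (rule_formula (mkRule H [] B [])).
Proof.
  intros HH HB. unfold rule_formula. simpl. rewrite !app_nil_r. split; split.
  - apply at_bigAnd. intros g Hg. apply in_map_iff in Hg as [a [<- Ha]]. simpl. right; apply HB, Ha.
  - apply at_bigOr. intros g Hg. apply in_map_iff in Hg as [a [<- Ha]]. simpl. left; apply HH, Ha.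
  - apply pol_bigAnd. intros g Hg. apply in_map_iff in Hg as [a [<- Ha]]. simpl. apply HB, Ha.
  - apply pol_bigOr. intros g Hg. apply in_map_iff in Hg as [a [<- Ha]]. simpl. apply HH, Ha.
Qed.

Lemma th_to_lp (P1 P2 : program atom) (Ap Am : aset atom) :
  th_rel_hyperequiv (theory_of P1) (theory_of P2) Ap Am -> lp_rel_hyperequiv P1 P2 Ap Am.
Proof.
  intros Hyp P [Pwf HP] Y. rewrite !lp_th.
  set (P' := fun r' : rule atom => exists r, P r /\ ldisj (Bneg r) Y /\ r' = mkRule (Hpos r) [] (Bpos r) []).
  assert (Hth : ApAm_theory Ap Am (theory_of P')).
  { intros f [r' [[r [Pr [_ ->]]] ->]]. destruct (HP r Pr) as [_ [H1 [H2 _]]].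
    apply pos_rule_ApAm; assumption. }
  assert (E0 : forall X, subset X Y -> ht_model X Y (theory_of P) <-> ht_model X Y (theory_of P')).
  { intros X XY. unfold ht_model, theory_of. split.
    - intros H f [r' [[r [Pr [Hd ->]]] ->]].
      specialize (H _ (ex_intro _ r (conj Pr eq_refl))).
      destruct (HP r Pr) as [Hn _].
      apply ht_rule in H; [|exact XY]. apply ht_rule; [exact XY|].
      destruct r as [Hp Hn' Bp Bn]; simpl in *; subst Hn'.
      destruct H as [H1 H2]. unfold sat_rule in *; simpl in *. split.
      + intros Hb _. apply H1; auto.
      + intros _ _ Hb. apply H2; auto. apply lsub_nil.
    - intros H f [r [Pr ->]].
      apply ht_rule; [exact XY|].
      destruct (classic (ldisj (Bneg r) Y)) as [Hd|Hd].
      + assert (H' := H _ (ex_intro _ _ (conj (ex_intro _ r (conj Pr (conj Hd eq_refl))) eq_refl))).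
        apply ht_rule in H'; [|exact XY].
        destruct (HP r Pr) as [Hn _].
        destruct r as [Hp Hn' Bp Bn]; simpl in *; subst Hn'.
        destruct H' as [H1 H2]. unfold sat_rule in *; simpl in *. split.
        * intros Hb _. apply H1; auto. apply ldisj_nil.
        * intros _ _ Hb. apply H2; auto; [apply lsub_nil| apply ldisj_nil].
      + unfold sat_rule. split; intros; contradiction. }
  assert (E : forall Q X, subset X Y -> ht_model X Y (theory_of (prog_union Q P)) <->
                ht_model X Y (th_union (theory_of Q) (theory_of P'))).
  { intros Q X XY. rewrite model_pu, model_thu, (E0 X XY). tauto. }
  rewrite (as_ext _ _ _ (E P1)), (as_ext _ _ _ (E P2)). apply Hyp; exact Hth.
Qed.


Fixpoint atoms f : list atom :=
  match f with
  | FAtom a => [a]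
  | FBot _ => []
  | FAnd g h | FOr g h | FImp g h => atoms g ++ atoms h
  end.

Lemma atoms_in_of S f : (forall a, In a (atoms f) -> S a) -> atoms_in S f.
Proof.
  induction f; simpl; intros H.
  - apply H; left; reflexivity.
  - exact I.
  - split; [apply IHf1| apply IHf2]; intros a Ha; apply H; apply in_or_app; [left|right]; exact Ha.
  - split; [apply IHf1| apply IHf2]; intros a Ha; apply H; apply in_or_app; [left|right]; exact Ha.
  - split; [apply IHf1| apply IHf2]; intros a Ha; apply H; apply in_or_app; [left|right]; exact Ha.
Qed.

Lemma mono (Ap Am : aset atom) X X' Y f :
  atoms_in (fun a => (Ap a -> Am a -> (X a <-> X' a)) /\ (Ap a -> ~ Am a -> X a -> X' a) /\
                     (Am a -> ~ Ap a -> X' a -> X a)) f ->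
  (pol_ok Ap Am true f -> htsat X Y f -> htsat X' Y f) /\
  (pol_ok Ap Am false f -> htsat X' Y f -> htsat X Y f).
Proof.
  induction f as [a| |f1 IH1 f2 IH2|f1 IH1 f2 IH2|f1 IH1 f2 IH2]; simpl.
  - intros [C1 [C2 C3]]. split; intros Hp Hx.
    + destruct (classic (Am a)) as [Hm|Hm]; [apply C1; auto| apply C2; auto].
    + destruct (classic (Ap a)) as [Hm|Hm]; [apply C1; auto| apply C3; auto].
  - tauto.
  - intros [A1 A2]. specialize (IH1 A1); specialize (IH2 A2). tauto.
  - intros [A1 A2]. specialize (IH1 A1); specialize (IH2 A2). tauto.
  - intros [A1 A2]. specialize (IH1 A1); specialize (IH2 A2). split.
    + tauto.
    + tauto.
Qed.

Lemma filt (ls : list atom) (Q : atom -> Prop) : exists ls' : list atom, forall a, In a ls' <-> In a ls /\ Q a.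
Proof.
  induction ls as [|x xs [l' IH]].
  - exists []; simpl; tauto.
  - destruct (classic (Q x)) as [Hq|Hq].
    + exists (x :: l'). intros a; simpl; rewrite IH. split; [intros [<-|H]; tauto| intros [[<-|H] Ha]; tauto].
    + exists l'. intros a; simpl; rewrite IH. split; [tauto| intros [[<-|H] Ha]; [contradiction| tauto]].
Qed.

Lemma key (Ap Am : aset atom) X0 X Y f (B H : list atom) :
  pol_ok Ap Am true f -> subset X Y -> ~ htsat X0 Y f -> htsat X Y f ->
  (forall a, In a B <-> In a (atoms f) /\ X0 a /\ Am a) ->
  (forall a, In a H <-> In a (atoms f) /\ Y a /\ ~ X0 a /\ Ap a) ->
  lsub B X -> lmeets H X.
Proof.
  intros Hp XY Hb Hg EB EH HB. apply NNPP; intro HM. apply Hb.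
  refine (proj1 (mono Ap Am X X0 Y f _) Hp Hg).
  apply atoms_in_of. intros a Ha.
  assert (L1 : Am a -> X0 a -> X a) by (intros Hm Hx; apply HB, EB; auto).
  assert (L2 : Ap a -> X a -> X0 a)
    by (intros Hq Hx; apply NNPP; intro Hn; apply HM; exists a; split; [apply EH; split; [exact Ha| split; [apply XY, Hx|auto]]| exact Hx]).
  split; [intros; split; auto| split; auto].
Qed.


Lemma lp_to_th_one (Q1 Q2 : program atom) (Ap Am : aset atom) (T : theory atom) Y :
  lp_rel_hyperequiv Q1 Q2 Ap Am -> ApAm_theory Ap Am T ->
  th_answer_set (th_union (theory_of Q1) T) Y -> th_answer_set (th_union (theory_of Q2) T) Y.
Proof.
  intros Hyp HT HAS.
  assert (HYT : ht_model Y Y T) by (intros f Hf; apply (proj1 HAS); right; exact Hf).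
  set (PY := fun r : rule atom => exists f X0, T f /\ subset X0 Y /\ ~ htsat X0 Y f /\
      Hneg r = [] /\ Bneg r = [] /\
      (forall a, In a (Bpos r) <-> In a (atoms f) /\ X0 a /\ Am a) /\
      (forall a, In a (Hpos r) <-> In a (atoms f) /\ Y a /\ ~ X0 a /\ Ap a)).
  assert (Ctx : lp_context Ap Am PY).
  { split.
    - intros r [f [X0 [Tf [XY0 [Hb [Hn [Bn [EB EH]]]]]]]]. left. intro Heq.
      assert (Hm : lmeets (Hpos r) Y).
      { apply (key Ap Am X0 Y Y f (Bpos r) (Hpos r)); auto.
        - apply (HT f Tf).
        - apply subset_refl.
        - intros a Ha; apply XY0, EB, Ha. }
      rewrite Heq in Hm. destruct Hm as [a [[] _]].
    - intros r [f [X0 [Tf [XY0 [Hb [Hn [Bn [EB EH]]]]]]]]. split; [exact Hn|]. split; [|split].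
      + intros a Ha; apply EH, Ha.
      + intros a Ha; apply EB, Ha.
      + rewrite Bn; apply lsub_nil. }
  assert (E : forall X, subset X Y -> ht_model X Y (theory_of PY) <-> ht_model X Y T).
  { intros X XY. split.
    - intros H f Tf. apply NNPP; intro Hnf.
      destruct (filt (atoms f) (fun a => X a /\ Am a)) as [B EB].
      destruct (filt (atoms f) (fun a => Y a /\ ~ X a /\ Ap a)) as [Hh EH].
      assert (Hr : htsat X Y (rule_formula (mkRule Hh [] B []))).
      { apply H. eexists; split; [|reflexivity]. exists f, X. simpl. exact (conj Tf (conj XY (conj Hnf (conj eq_refl (conj eq_refl (conj EB EH)))))). }
      apply ht_rule in Hr; [|exact XY]. simpl in Hr.
      destruct Hr as [_ Hr].
      assert (HBX : lsub B X) by (intros a Ha; apply EB, Ha).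
      destruct (Hr (lsub_nil _) (ldisj_nil _) HBX) as [a [Ha Xa]].
      apply EH in Ha. tauto.
    - intros H g [r [[f [X0 [Tf [XY0 [Hb [Hn [Bn [EB EH]]]]]]]] ->]].
      apply ht_rule; [exact XY|]. split.
      + intros Hb' _. left. apply (key Ap Am X0 Y Y f (Bpos r) (Hpos r)); auto.
        * apply (HT f Tf).
        * apply subset_refl.
      + intros _ _ Hb'. apply (key Ap Am X0 X Y f (Bpos r) (Hpos r)); auto.
        apply (HT f Tf). }
  assert (E2 : forall Q X, subset X Y -> ht_model X Y (theory_of (prog_union Q PY)) <->
                ht_model X Y (th_union (theory_of Q) T)).
  { intros Q X XY. rewrite model_pu, model_thu, (E X XY). tauto. }
  rewrite <- (as_ext _ _ _ (E2 Q2)), <- lp_th. apply Hyp; [exact Ctx|].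
  rewrite lp_th, (as_ext _ _ _ (E2 Q1)). exact HAS.
Qed.

Lemma lp_to_th (P1 P2 : program atom) (Ap Am : aset atom) :
  lp_rel_hyperequiv P1 P2 Ap Am -> th_rel_hyperequiv (theory_of P1) (theory_of P2) Ap Am.
Proof.
  intros Hyp T HT Y. split; intros H.
  - exact (lp_to_th_one _ _ _ _ _ _ Hyp HT H).
  - refine (lp_to_th_one _ _ _ _ _ _ _ HT H).
    intros P HP I. symmetry. apply Hyp, HP.
Qed.

End Proof.

Theorem mainTheorem13 (atom : Type) (P1 P2 : program atom) (Ap Am : aset atom) :
  is_program P1 -> is_program P2 ->
  (lp_rel_hyperequiv P1 P2 Ap Am <->
   th_rel_hyperequiv (theory_of P1) (theory_of P2) Ap Am).
Proof.
  intros _ _. split; [apply lp_to_th| apply th_to_lp].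
Qed.
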